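(* Let $G\subseteq\mathrm{Cl}_n$ and $p$ a probability distribution on $G$ such that $S=\sum_{g\in G}p(g)\omega(g)^\dagger M\omega(g)$ is invertible, and for each $g\in G$ let $\Lambda(g)$ be a quantum channel. Then $S=\frac1d\sum_{a\in\mathbb{F}_2^{2n}}s_a|\sigma_a)(\sigma_a|$ with $s_a\in(0,1]$ (so the $s_a$ are the eigenvalues of $S$), each $\bar\Lambda_a$ is a quantum channel, and the noisy frame operator satisfies $$\tilde S:=\sum_{g\in G}p(g)\omega(g)^\dagger M\omega(g)\Lambda(g)=\frac1d\sum_{a\in\mathbb{F}_2^{2n}}s_a|\sigma_a)(\sigma_a|\bar\Lambda_a.$$ Furthermore, if every $\Lambda(g)$ is a Pauli channel, then $\bar\Lambda_a|\sigma_a)=\bar\lambda_a|\sigma_a)$ with $\bar\lambda_a\in[-1,1]$.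
   Context: $d=2^n$; $(A|B)=\mathrm{Tr}(A^\dagger B)$; $|A)(B|$ is the superoperator $C\mapsto(B|C)A$; $\omega(g)(A)=gAg^\dagger$, $\omega(g)^\dagger(A)=g^\dagger Ag$; $E_x=|x\rangle\langle x|$, $M=\sum_{x\in\mathbb{F}_2^n}|E_x)(E_x|$. Pauli operators $\sigma_a$, $a\in\mathbb{F}_2^{2n}$, with per-qubit convention $\sigma_{00}=\mathbb 1,\sigma_{01}=X,\sigma_{11}=Y,\sigma_{10}=Z$. $Z_z=\bigotimes_iZ^{z_i}$ for $z\in\mathbb{F}_2^n$; for $g\in\mathrm{Cl}_n$, $\Xi_z(g)$ is the Pauli operator $\sigma_b$ with $g^\dagger Z_zg=\pm\sigma_b$. $s_a=\sum_{z\in\mathbb{F}_2^n}\sum_{g\in G:\Xi_z(g)=\sigma_a}p(g)$, $\bar\Lambda_a=s_a^{-1}\sum_z\sum_{g\in G:\Xi_z(g)=\sigma_a}p(g)\Lambda(g)$. A Pauli channel is $\Lambda(\rho)=\sum_bq_b\sigma_b\rho\sigma_b$ with $q$ a probability vector; then $\Lambda(\sigma_a)=\lambda_a\sigma_a$. If $\Lambda(g)$ has eigenvalues $\lambda_a(g)$, $\bar\lambda_a=s_a^{-1}\sum_z\sum_{g\in G:\Xi_z(g)=\sigma_a}p(g)\lambda_a(g)$. *)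

(* Defs.v *)
From HB Require Import structures.
From mathcomp Require Import all_boot all_order all_algebra all_field.
From mathcomp Require Import mxtens.
Set Implicit Arguments. Unset Strict Implicit. Unset Printing Implicit Defensive.
Import Order.TTheory GRing.Theory Num.Theory.
Local Open Scope ring_scope.

Notation qdim n := (2 ^ n)%N.
Notation op n := 'M[algC]_(qdim n).

Definition adj {m k} (A : 'M[algC]_(m, k)) : 'M[algC]_(k, m) := (map_mx Num.conj A)^T.

(* Hilbert-Schmidt inner product (A|B) = Tr(A^dagger B) *)
Definition hs {m} (A B : 'M[algC]_m) : algC := \tr (adj A *m B).

(* the superoperator |A)(B| : C |-> (B|C) A *)
Definition sop_outer {m} (A B : 'M[algC]_m) : 'M[algC]_m -> 'M[algC]_m :=
  fun C => hs B C *: A.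

Definition omega {m} (g : 'M[algC]_m) (A : 'M[algC]_m) := g *m A *m adj g.
Definition omega_adj {m} (g : 'M[algC]_m) (A : 'M[algC]_m) := adj g *m A *m g.

(* computational basis: basis state x in F_2^n is identified with the
   ordinal x < 2^n, its i-th bit being odd (x %/ 2^i). *)
Definition bit {n} (x : 'I_(qdim n)) (i : 'I_n) : bool := odd (x %/ 2 ^ i).

(* E_x = |x><x| and M = sum_x |E_x)(E_x| *)
Definition Ebas {n} (x : 'I_(qdim n)) : op n := delta_mx x x.
Definition Mdeph {n} (A : op n) : op n := \sum_(x < qdim n) sop_outer (Ebas x) (Ebas x) A.

(* F_2^{2n}: one pair of bits per qubit;
   single-qubit convention sigma_00 = 1, sigma_01 = X, sigma_11 = Y, sigma_10 = Z *)
Definition F2_2n (n : nat) := {ffun 'I_n -> bool * bool}.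
Definition F2_n (n : nat) := {ffun 'I_n -> bool}.

Definition pauli1 (a : bool * bool) (r c : bool) : algC :=
  match a with
  | (false, false) => if r == c then 1 else 0
  | (false, true)  => if r != c then 1 else 0
  | (true, true)   => if r == c then 0 else if r then 'i else - 'i
  | (true, false)  => if r == c then (if r then -1 else 1) else 0
  end.

Definition pauli {n} (a : F2_2n n) : op n :=
  \matrix_(x, y) \prod_(i < n) pauli1 (a i) (bit x i) (bit y i).

Definition Zop {n} (z : F2_n n) : op n := pauli [ffun i => (z i, false)].

Definition unitary {m} (g : 'M[algC]_m) := g *m adj g = 1%:M.

Definition clifford {n} (g : op n) :=
  unitary g /\ forall a : F2_2n n, exists b : F2_2n n,
      omega g (pauli a) = pauli b \/ omega g (pauli a) = - pauli b.

(* Xi_z(g) = sigma_a, i.e. g^dagger Z_z g = +- sigma_a *)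
Definition Xi_is {n} (z : F2_n n) (g : op n) (a : F2_2n n) : bool :=
  (omega_adj g (Zop z) == pauli a) || (omega_adj g (Zop z) == - pauli a).

(* p is a probability distribution on the finite set G (a duplicate-free list) *)
Definition prob_on {n} (G : seq (op n)) (p : op n -> algC) :=
  (forall g, g \in G -> 0 <= p g) /\ \sum_(g <- G) p g = 1.

Definition psd {m} (A : 'M[algC]_m) :=
  forall v : 'cV[algC]_m, 0 <= (adj v *m A *m v) 0 0.

Definition choi {m} (L : 'M[algC]_m -> 'M[algC]_m) : 'M[algC]_(m * m) :=
  \sum_(i < m) \sum_(j < m) (delta_mx i j *t L (delta_mx i j)).

(* quantum channel: linear, completely positive, trace preserving *)
Definition channel {m} (L : 'M[algC]_m -> 'M[algC]_m) :=
  [/\ forall (c : algC) A B, L (c *: A + B) = c *: L A + L B,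
      psd (choi L) &
      forall A, \tr (L A) = \tr A].

Definition pauli_channel {n} (L : op n -> op n) :=
  exists q : F2_2n n -> algC,
    [/\ forall b, 0 <= q b, \sum_b q b = 1 &
        forall rho, L rho = \sum_b q b *: (pauli b *m rho *m pauli b)].

Definition frame {n} (G : seq (op n)) (p : op n -> algC) (A : op n) : op n :=
  \sum_(g <- G) p g *: omega_adj g (Mdeph (omega g A)).
Definition noisy_frame {n} (G : seq (op n)) (p : op n -> algC)
    (Lam : op n -> op n -> op n) (A : op n) : op n :=
  \sum_(g <- G) p g *: omega_adj g (Mdeph (omega g (Lam g A))).

Definition s_coef {n} (G : seq (op n)) (p : op n -> algC) (a : F2_2n n) : algC :=
  \sum_(z : F2_n n) \sum_(g <- G | Xi_is z g a) p g.

Definition Lbar {n} (G : seq (op n)) (p : op n -> algC)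
    (Lam : op n -> op n -> op n) (a : F2_2n n) (A : op n) : op n :=
  (s_coef G p a)^-1 *: \sum_(z : F2_n n) \sum_(g <- G | Xi_is z g a) p g *: Lam g A.

Definition lbar {n} (G : seq (op n)) (p : op n -> algC)
    (lam : op n -> F2_2n n -> algC) (a : F2_2n n) : algC :=
  (s_coef G p a)^-1 * \sum_(z : F2_n n) \sum_(g <- G | Xi_is z g a) p g * lam g a.

(* Main.v *)
Require Import Defs.
From HB Require Import structures.
From mathcomp Require Import all_boot all_order all_algebra all_field.
From mathcomp Require Import mxtens.
From mathcomp Require Import ring.
Import Order.TTheory GRing.Theory Num.Theory.
Local Open Scope ring_scope.

Module Aux.
Set Implicit Arguments. Unset Strict Implicit. Unset Printing Implicit Defensive.
Lemma bits_sum n x : (x < 2 ^ n)%N -> x = (\sum_(i < n) odd (x %/ 2 ^ i) * 2 ^ i)%N.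
Proof.
elim: n x => [|n IH] x hx.
  by rewrite big_ord0; move: hx; rewrite expn0; case: x.
rewrite big_ord_recl /= expn0 divn1 muln1.
have hx2 : (x %/ 2 < 2 ^ n)%N by rewrite ltn_divLR // -expnSr.
have -> : (\sum_(i < n) odd (x %/ 2 ^ bump 0 i) * 2 ^ bump 0 i =
          2 * \sum_(i < n) odd (x %/ 2 %/ 2 ^ i) * 2 ^ i)%N.
  rewrite big_distrr /=; apply: eq_bigr => i _.
  by rewrite /bump /= add1n expnS divnMA mulnCA.
rewrite -(IH _ hx2) divn2 -[in LHS](odd_double_half x) -muln2 mulnC.
by [].
Qed.

Definition bits n (x : 'I_(2 ^ n)) : {ffun 'I_n -> bool} := [ffun i => bit x i].

Lemma bits_inj n : injective (@bits n).
Proof.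
move=> x y h; apply/val_inj.
rewrite /= (bits_sum (ltn_ord x)) (bits_sum (ltn_ord y)).
apply: eq_bigr => i _; have := congr1 (fun f : {ffun 'I_n -> bool} => f i) h.
by rewrite !ffunE /bit => ->.
Qed.

Lemma bits_bij n : bijective (@bits n).
Proof. by apply: (inj_card_bij (@bits_inj n)); rewrite card_ffun card_bool !card_ord. Qed.

Lemma sum_bits n (R : nmodType) (F : {ffun 'I_n -> bool} -> R) :
  \sum_(x : 'I_(2 ^ n)) F (bits x) = \sum_f F f.
Proof. by rewrite (reindex (@bits n)) //; apply: onW_bij (bits_bij n). Qed.

Lemma bits_eq n (x y : 'I_(2 ^ n)) : (x == y) = [forall i, bit x i == bit y i].
Proof.
apply/eqP/forallP => [-> //|h]; apply: bits_inj; apply/ffunP => i.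
by rewrite !ffunE; apply/eqP.
Qed.

Definition pm n (f : 'I_n -> bool -> bool -> algC) : op n :=
  \matrix_(x, y) \prod_i f i (bit x i) (bit y i).

Lemma pmM n (f g : 'I_n -> bool -> bool -> algC) :
  pm f *m pm g = pm (fun i r c => \sum_w f i r w * g i w c).
Proof.
apply/matrixP => x y; rewrite /pm !mxE.
rewrite (eq_bigr (fun j => \prod_i (f i (bit x i) (bit j i) * g i (bit j i) (bit y i)))); last by move=> j _; rewrite !mxE -big_split.
rewrite bigA_distr_bigA /=.
rewrite -(sum_bits (fun h => \prod_i (f i (bit x i) (h i) * g i (h i) (bit y i)))).
by apply: eq_bigr => w _; apply: eq_bigr => i _; rewrite ffunE.
Qed.

Lemma pm_tr n (f : 'I_n -> bool -> bool -> algC) : \tr (pm f) = \prod_i \sum_r f i r r.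
Proof.
rewrite /mxtrace (eq_bigr (fun j => \prod_i f i (bit j i) (bit j i))); last by move=> j _; rewrite mxE.
rewrite bigA_distr_bigA /= -(sum_bits (fun h => \prod_i f i (h i) (h i))).
by apply: eq_bigr => w _; apply: eq_bigr => i _; rewrite ffunE.
Qed.

Lemma pm_adj n (f : 'I_n -> bool -> bool -> algC) :
  adj (pm f) = pm (fun i r c => (f i c r)^*).
Proof. by apply/matrixP => x y; rewrite !mxE rmorph_prod. Qed.

Lemma pm_scale n (e : 'I_n -> algC) (f : 'I_n -> bool -> bool -> algC) :
  pm (fun i r c => e i * f i r c) = (\prod_i e i) *: pm f.
Proof. by apply/matrixP => x y; rewrite !mxE big_split. Qed.

Lemma pauli_pm n (a : F2_2n n) : pauli a = pm (fun i => pauli1 (a i)).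
Proof. by []. Qed.

Lemma conjNi : Num.conj (- 'i : algC) = 'i.
Proof. by rewrite rmorphN /= conjCi opprK. Qed.
Lemma conjN1 : Num.conj (-1 : algC) = -1.
Proof. by rewrite rmorphN /= conjC1. Qed.
Lemma conjCi' : Num.conj ('i : algC) = - 'i.
Proof. exact: conjCi. Qed.

Ltac qsimp := rewrite !big_bool /= ?conjNi ?conjN1 ?conjCi' ?conjC1 ?conjC0
  ?mul0r ?mulr0 ?mul1r ?mulr1 ?addr0 ?add0r ?mulNr ?mulrN ?opprK ?mulCii ?mulN1r ?mulrN1 ?opprK
  ?addrN ?subrr ?addNr.

Lemma q1E u v : \sum_r \sum_w Num.conj (pauli1 u w r) * pauli1 v w r = if u == v then 2 else 0.
Proof.
case: u => [[] []]; case: v => [[] []]; qsimp => //.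
all: by rewrite ?mulr1.
Qed.

Definition e1 (u v : bool * bool) : algC :=
  if (u == (false, false)) || (v == (false, false)) || (u == v) then 1 else -1.

Lemma r1E u v :
  \sum_r \sum_w Num.conj (pauli1 u w r) *
     (\sum_l (\sum_k pauli1 v w k * pauli1 u k l) * pauli1 v l r) = 2 * e1 u v.
Proof.
rewrite /e1; case: u => [[] []]; case: v => [[] []]; qsimp => //.
all: rewrite ?mulr1 ?mul1r ?mulrN ?mulNr ?mulCii ?opprK; ring.
Qed.

Lemma dnz n : (qdim n)%:R != 0 :> algC.
Proof. by rewrite pnatr_eq0 expn_eq0. Qed.

Lemma hs_pauli n (a b : F2_2n n) :
  hs (pauli a) (pauli b) = if a == b then (qdim n)%:R else 0.
Proof.
rewrite /hs !pauli_pm pm_adj pmM pm_tr.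
under eq_bigr => i _ do rewrite q1E.
case: eqP => [->|neq].
  rewrite (eq_bigr (fun _ => 2)) => [|i _]; last by rewrite eqxx.
  by rewrite prodr_const card_ord natrX.
have : ~~ [forall i, a i == b i].
  apply/negP => /forallP h; apply: neq; apply/ffunP => i; exact/eqP/h.
case/forallPn => i hi; rewrite (bigD1 i) //= ifN //.
by rewrite mul0r.
Qed.

Lemma hs_paulii n (a : F2_2n n) : hs (pauli a) (pauli a) = (qdim n)%:R.
Proof. by rewrite hs_pauli eqxx. Qed.

Section HS.
Variable m : nat.
Implicit Types A B C : 'M[algC]_m.

Lemma hs_lin A c B C : hs A (c *: B + C) = c * hs A B + hs A C.
Proof. by rewrite /hs mulmxDr -scalemxAr mxtraceD mxtraceZ. Qed.

Lemma hsN A B : hs A (- B) = - hs A B.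
Proof. by rewrite /hs mulmxN linearN. Qed.

Lemma hs0 A : hs A 0 = 0.
Proof. by rewrite /hs mulmx0 mxtrace0. Qed.

Lemma hs_sum A I (r : seq I) (P : pred I) (F : I -> 'M[algC]_m) :
  hs A (\sum_(i <- r | P i) F i) = \sum_(i <- r | P i) hs A (F i).
Proof. by rewrite /hs mulmx_sumr raddf_sum. Qed.

Lemma hsZr A c B : hs A (c *: B) = c * hs A B.
Proof. by rewrite -[c *: B]addr0 hs_lin hs0 addr0. Qed.

Lemma adjM p q r (X : 'M[algC]_(p, q)) (Y : 'M[algC]_(q, r)) : adj (X *m Y) = adj Y *m adj X.
Proof. by rewrite /adj map_mxM trmx_mul. Qed.

Lemma adjK p q (X : 'M[algC]_(p, q)) : adj (adj X) = X.
Proof. by apply/matrixP => i j; rewrite !mxE conjCK. Qed.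

Lemma adjZ p q c (X : 'M[algC]_(p, q)) : adj (c *: X) = Num.conj c *: adj X.
Proof. by apply/matrixP => i j; rewrite !mxE rmorphM. Qed.

Lemma hsZl A c B : hs (c *: A) B = Num.conj c * hs A B.
Proof. by rewrite /hs adjZ -scalemxAl mxtraceZ. Qed.

End HS.

Lemma pauli_sign_inj n (a b : F2_2n n) :
  pauli a = pauli b \/ pauli a = - pauli b -> a = b.
Proof.
move=> h; apply/eqP; apply/negP => /negP /negbTE hab.
have H1 : hs (pauli a) (pauli b) = 0 by rewrite hs_pauli hab.
case: h => e; move: (hs_paulii a); rewrite {2}e ?hsN H1 ?oppr0 => /eqP;
  by rewrite eq_sym (negbTE (dnz n)).
Qed.

Lemma hs_conj3 n (a b : F2_2n n) :
  hs (pauli a) (pauli b *m pauli a *m pauli b) = (qdim n)%:R * \prod_i e1 (a i) (b i).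
Proof.
rewrite /hs !pauli_pm pm_adj !pmM pm_tr.
under eq_bigr => i _ do rewrite r1E.
by rewrite big_split /= prodr_const card_ord natrX.
Qed.

Lemma e1_sign n (a b : F2_2n n) :
  let e := \prod_i e1 (a i) (b i) in e = 1 \/ e = -1.
Proof.
rewrite /=; apply: (big_ind (fun x : algC => x = 1 \/ x = -1)); first by left.
  by move=> x y [] -> [] ->; rewrite ?mul1r ?mulN1r ?opprK; auto.
by move=> i _; rewrite /e1; case: ifP; auto.
Qed.

Definition chi n (z : F2_n n) (x : 'I_(qdim n)) : algC :=
  \prod_i (if z i && bit x i then -1 else 1).

Lemma prod_eq n (x y : 'I_(qdim n)) : \prod_i ((bit x i == bit y i)%:R : algC) = (x == y)%:R.
Proof.
rewrite bits_eq; case: (boolP [forall _, _]) => [/forallP h|/forallPn [i hi]].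
  by rewrite big1 // => i _; rewrite h.
by rewrite (bigD1 i) //= (negbTE hi) mul0r.
Qed.

Lemma Zop_entry n (z : F2_n n) x y : Zop z x y = (x == y)%:R * chi z x.
Proof.
rewrite /Zop pauli_pm mxE -prod_eq /chi -big_split /=.
apply: eq_bigr => i _; rewrite ffunE.
by case: (z i) (bit x i) (bit y i) => [] [] []; rewrite /= ?mul1r ?mul0r.
Qed.

Lemma chi_real n (z : F2_n n) x : Num.conj (chi z x) = chi z x.
Proof.
rewrite /chi rmorph_prod; apply: eq_bigr => i _.
by case: (z i && bit x i); rewrite /= ?conjN1 ?conjC1.
Qed.

Lemma adjE p q (X : 'M[algC]_(p, q)) i j : adj X i j = Num.conj (X j i).
Proof. by rewrite !mxE. Qed.

Lemma hs_Zop n (z : F2_n n) (B : op n) : hs (Zop z) B = \sum_w chi z w * B w w.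
Proof.
rewrite /hs /mxtrace; apply: eq_bigr => w _; rewrite mxE.
rewrite (bigD1 w) //= big1 => [|k hk]; last by rewrite adjE Zop_entry (negbTE hk) mul0r rmorph0 mul0r.
by rewrite adjE Zop_entry eqxx mul1r chi_real addr0.
Qed.

Lemma chi_orth n (w x : 'I_(qdim n)) : \sum_z chi z w * chi z x = (qdim n)%:R * (w == x)%:R.
Proof.
rewrite /chi.
pose F i (b : bool) : algC := (if b && bit w i then -1 else 1) * (if b && bit x i then -1 else 1).
rewrite (eq_bigr (fun z : F2_n n => \prod_i F i (z i))); last by move=> z _; rewrite -big_split.
rewrite -(bigA_distr_bigA F) /=.
rewrite -prod_eq natrX.
have -> : (2:algC) ^+ n = \prod_(i < n) 2 by rewrite prodr_const card_ord.
rewrite -big_split /=.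
apply: eq_bigr => i _; rewrite big_bool /F /=.
clear F; case: (bit w i); case: (bit x i); rewrite /=; ring.
Qed.

Lemma hs_Ebas n (w : 'I_(qdim n)) (B : op n) : hs (Ebas w) B = B w w.
Proof.
rewrite /hs /mxtrace (bigD1 w) //= big1 => [|i hi].
  rewrite mxE (bigD1 w) //= big1 => [|k hk]; last by rewrite !mxE (negbTE hk) andFb rmorph0 mul0r.
  by rewrite !mxE eqxx rmorph1 mul1r !addr0.
rewrite mxE big1 // => k _; rewrite !mxE (negbTE hi) andbF rmorph0 mul0r //.
Qed.

Lemma MdephE n (B : op n) :
  Mdeph B = (qdim n)%:R^-1 *: \sum_(z : F2_n n) hs (Zop z) B *: Zop z.
Proof.
apply/matrixP => x y; rewrite /Mdeph /sop_outer summxE mxE summxE.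
under eq_bigr => w _ do rewrite !mxE hs_Ebas.

transitivity ((qdim n)%:R^-1 * \sum_(z : F2_n n) \sum_w ((x == y)%:R * B w w) * (chi z w * chi z x)).
  rewrite (bigD1 x) //= big1 => [|w hw]; last by rewrite (eq_sym x) (negbTE hw) mulr0.
  rewrite exchange_big /=.
  under eq_bigr => w _ do rewrite -mulr_sumr chi_orth.
  rewrite (bigD1 x) //= big1 => [|w hw]; last by rewrite (negbTE hw) !mulr0.
  rewrite eqxx !addr0 mulr1 eq_sym.
  by rewrite /=; field; exact: dnz.
congr (_ * _); apply: eq_bigr => z _.
rewrite mxE hs_Zop Zop_entry mulr_suml; apply: eq_bigr => w _; ring.
Qed.

Lemma sign_comb (V : zmodType) (X X' Y : V) :
  (X = Y \/ X = - Y) -> (X' = Y \/ X' = - Y) -> X = X' \/ X = - X'.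
Proof. by move=> [] -> [] ->; rewrite ?opprK; auto. Qed.

Lemma sign_map (V W : zmodType) (f : V -> W) (X Y : V) :
  (forall v, f (- v) = - f v) -> (X = Y \/ X = - Y) -> (f X = f Y \/ f X = - f Y).
Proof. by move=> fN [] ->; rewrite ?fN; auto. Qed.

Section Unitary.
Variable m : nat.
Variable g : 'M[algC]_m.
Hypothesis ug : unitary g.

Lemma unit_adj : adj g *m g = 1%:M.
Proof. exact: mulmx1C ug. Qed.

Lemma omega_adjK X : omega_adj g (omega g X) = X.
Proof. by rewrite /omega_adj /omega !mulmxA unit_adj mul1mx -mulmxA unit_adj mulmx1. Qed.

Lemma omegaK X : omega g (omega_adj g X) = X.
Proof. by rewrite /omega_adj /omega !mulmxA ug mul1mx -mulmxA ug mulmx1. Qed.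

End Unitary.

Lemma omega_adjN m (g X : 'M[algC]_m) : omega_adj g (- X) = - omega_adj g X.
Proof. by rewrite /omega_adj mulmxN mulNmx. Qed.

Lemma omegaN m (g X : 'M[algC]_m) : omega g (- X) = - omega g X.
Proof. by rewrite /omega mulmxN mulNmx. Qed.

Lemma hs_omega m (g Z B : 'M[algC]_m) : hs Z (omega g B) = hs (omega_adj g Z) B.
Proof.
rewrite /hs /omega /omega_adj !adjM adjK !mulmxA mxtrace_mulC !mulmxA.
done.
Qed.

Lemma pauli_sign_inj' n (a b : F2_2n n) :
  pauli a = pauli b \/ pauli a = - pauli b -> a = b.
Proof. exact: pauli_sign_inj. Qed.

Lemma XiP n z (g : op n) a :
  reflect (omega_adj g (Zop z) = pauli a \/ omega_adj g (Zop z) = - pauli a) (Xi_is z g a).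
Proof. by apply: (iffP orP) => -[h|h]; [left; exact/eqP | right; exact/eqP | left; exact/eqP | right; exact/eqP]. Qed.

Lemma Xi_exists n (g : op n) z : clifford g -> exists a, Xi_is z g a.
Proof.
case=> ug cl.
have [bf hbf] := fin_all_exists cl.
have inj : injective bf.
  move=> a a' e; apply: pauli_sign_inj.
  have h1 := sign_map (@omega_adjN _ g) (hbf a).
  have h2 := sign_map (@omega_adjN _ g) (hbf a').
  rewrite !omega_adjK // e in h1 h2.
  exact: sign_comb h1 h2.
have [h hK Kh] := injF_bij inj.
exists (h [ffun i => (z i, false)]); apply/XiP.
have := hbf (h [ffun i => (z i, false)]); rewrite Kh => -[e|e].
  by rewrite /Zop -e omega_adjK //; left.
by rewrite /Zop -[pauli _]opprK -e -omegaN omega_adjK //; right.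
Qed.

Lemma Xi_uniq n (g : op n) z a a' : Xi_is z g a -> Xi_is z g a' -> a = a'.
Proof.
move=> /XiP h /XiP h'; apply: pauli_sign_inj.
have [e|e] := h; rewrite e in h'.
  case: h' => ->; rewrite ?opprK; auto.
case: h' => e'.
  by right; rewrite -e' opprK.
by left; apply: oppr_inj.
Qed.

Lemma Xi_uniq_z n (g : op n) z z' a : unitary g -> Xi_is z g a -> Xi_is z' g a -> z = z'.
Proof.
move=> ug /XiP h /XiP h'.
have := sign_comb h h'.
move/(sign_map (@omegaN _ g)); rewrite !omegaK // /Zop => /pauli_sign_inj e.
apply/ffunP => i; have := congr1 (fun f : F2_2n n => f i) e; rewrite !ffunE.
by case.
Qed.

Definition cnt n (g : op n) (a : F2_2n n) : algC := \sum_(z : F2_n n) (Xi_is z g a)%:R.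

Lemma omega_adjZ m (g X : 'M[algC]_m) c : omega_adj g (c *: X) = c *: omega_adj g X.
Proof. by rewrite /omega_adj -scalemxAr -scalemxAl. Qed.

Lemma omega_adj_sum m (g : 'M[algC]_m) I (r : seq I) (P : pred I) F :
  omega_adj g (\sum_(i <- r | P i) F i) = \sum_(i <- r | P i) omega_adj g (F i).
Proof. by rewrite /omega_adj mulmx_sumr mulmx_suml. Qed.

Lemma hsNl m (A B : 'M[algC]_m) : hs (- A) B = - hs A B.
Proof. by rewrite -scaleN1r hsZl conjN1 mulN1r. Qed.

Lemma Kform n (g : op n) B : clifford g ->
  omega_adj g (Mdeph (omega g B)) =
  (qdim n)%:R^-1 *: \sum_a cnt g a *: sop_outer (pauli a) (pauli a) B.
Proof.
move=> cg; rewrite MdephE omega_adjZ omega_adj_sum; congr (_ *: _).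
transitivity (\sum_(z : F2_n n) \sum_a (Xi_is z g a)%:R *: sop_outer (pauli a) (pauli a) B).
  apply: eq_bigr => z _; have [a0 h0] := Xi_exists z cg.
  rewrite (bigD1 a0) //= big1 => [|a ha]; last first.
    case: (boolP (Xi_is z g a)) => h; last by rewrite scale0r.
    by rewrite (Xi_uniq h h0) eqxx in ha.
  rewrite h0 scale1r addr0 /sop_outer hs_omega omega_adjZ.
  by case/XiP: h0 => e; rewrite e ?hsNl ?scaleNr ?scalerN ?opprK.
rewrite exchange_big; apply: eq_bigr => a _; by rewrite /cnt scaler_suml.
Qed.

Lemma reorg n I (r : seq I) (P : pred I) (q : I -> algC) (c h : I -> F2_2n n -> algC) :
  \sum_(g <- r | P g) q g *: ((qdim n)%:R^-1 *: \sum_a c g a *: (h g a *: pauli a)) =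
  (qdim n)%:R^-1 *: \sum_a (\sum_(g <- r | P g) q g * c g a * h g a) *: pauli a.
Proof.
under eq_bigr => g _ do rewrite scalerA mulrC -scalerA scaler_sumr.
rewrite -scaler_sumr; congr (_ *: _).
rewrite exchange_big; apply: eq_bigr => a _; rewrite scaler_suml.
by apply: eq_bigr => g _; rewrite !scalerA.
Qed.

Lemma sum_Xi n (G : seq (op n)) (p : op n -> algC) a (h : op n -> algC) :
  \sum_(z : F2_n n) \sum_(g <- G | Xi_is z g a) p g * h g =
  \sum_(g <- G) p g * cnt g a * h g.
Proof.
under eq_bigr do rewrite big_mkcond.
rewrite exchange_big; apply: eq_bigr => g _.
rewrite /cnt mulr_sumr mulr_suml; apply: eq_bigr => z _.
by case: (Xi_is z g a); rewrite ?mulr1 ?mulr0 ?mul0r.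
Qed.

Lemma s_coefE n (G : seq (op n)) (p : op n -> algC) a :
  s_coef G p a = \sum_(g <- G) p g * cnt g a * 1.
Proof.
rewrite -sum_Xi /s_coef; apply: eq_bigr => z _; apply: eq_bigr => g _.
by rewrite mulr1.
Qed.

Lemma frameE n (G : seq (op n)) (p : op n -> algC) A :
  (forall g, g \in G -> clifford g) ->
  frame G p A = (qdim n)%:R^-1 *: \sum_a s_coef G p a *: sop_outer (pauli a) (pauli a) A.
Proof.
move=> hcl; rewrite /frame big_seq.
rewrite (eq_bigr (fun g => p g *: ((qdim n)%:R^-1 *: \sum_a cnt g a *: (hs (pauli a) A *: pauli a))));
  last by move=> g hg; rewrite (Kform _ (hcl g hg)).
rewrite reorg; congr (_ *: _); apply: eq_bigr => a _.
rewrite /sop_outer scalerA; congr (_ *: _).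
rewrite s_coefE big_seq mulr_suml; apply: eq_bigr => g _.
by rewrite mulr1.
Qed.

Lemma noisyE n (G : seq (op n)) (p : op n -> algC) (Lam : op n -> op n -> op n) A :
  (forall g, g \in G -> clifford g) -> (forall a, s_coef G p a != 0) ->
  noisy_frame G p Lam A = (qdim n)%:R^-1 *: \sum_a
    s_coef G p a *: sop_outer (pauli a) (pauli a) (Lbar G p Lam a A).
Proof.
move=> hcl hsn; rewrite /noisy_frame big_seq.
rewrite (eq_bigr (fun g => p g *: ((qdim n)%:R^-1 *: \sum_a cnt g a *: (hs (pauli a) (Lam g A) *: pauli a))));
  last by move=> g hg; rewrite (Kform _ (hcl g hg)).
rewrite reorg; congr (_ *: _); apply: eq_bigr => a _.
rewrite /sop_outer scalerA; congr (_ *: _).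
rewrite /Lbar hsZr hs_sum.
rewrite [in RHS](eq_bigr (fun z => \sum_(g <- G | Xi_is z g a) p g * hs (pauli a) (Lam g A)));
  last by move=> z _; rewrite hs_sum; apply: eq_bigr => g _; rewrite hsZr.
rewrite (sum_Xi G p a (fun g => hs (pauli a) (Lam g A))) mulrA mulfV ?hsn // mul1r.
by rewrite -big_seq.
Qed.

Lemma s_ge0 n (G : seq (op n)) p a : prob_on G p -> 0 <= s_coef G p a.
Proof.
case=> p0 _; rewrite /s_coef; apply: sumr_ge0 => z _.
rewrite big_seq_cond; apply: sumr_ge0 => g /andP [hg _]; exact: p0.
Qed.

Lemma cnt01 n (g : op n) a : unitary g -> cnt g a = 0 \/ cnt g a = 1.
Proof.
move=> ug; rewrite /cnt; case: (pickP (fun z => Xi_is z g a)) => [z0 h0|hn].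
  right; rewrite (bigD1 z0) //= h0 big1 ?addr0 // => z hz.
  case: (boolP (Xi_is z g a)) => h //.
  by rewrite (Xi_uniq_z ug h h0) eqxx in hz.
by left; apply: big1 => z _; rewrite hn.
Qed.

Lemma s_le1 n (G : seq (op n)) p a :
  (forall g, g \in G -> clifford g) -> prob_on G p -> s_coef G p a <= 1.
Proof.
move=> hcl [p0 p1]; rewrite s_coefE -[X in _ <= X]p1 big_seq [X in _ <= X]big_seq.
apply: ler_sum => g hg; have [ug _] := hcl g hg.
have := @cnt01 n g a ug; case => ->; rewrite ?mulr0 ?mul0r ?mulr1 //; exact: p0.
Qed.

Lemma frame_pauli0 n (G : seq (op n)) p a :
  (forall g, g \in G -> clifford g) -> s_coef G p a = 0 -> frame G p (pauli a) = 0.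
Proof.
move=> hcl s0; rewrite frameE // big1 ?scaler0 // => b _.
rewrite /sop_outer hs_pauli; case: eqP => [->|_]; by rewrite ?s0 ?scale0r ?scaler0.
Qed.

Lemma frame0 n (G : seq (op n)) p :
  (forall g, g \in G -> clifford g) -> frame G p 0 = 0.
Proof.
move=> hcl; rewrite frameE // big1 ?scaler0 // => b _.
by rewrite /sop_outer hs0 scale0r scaler0.
Qed.

Lemma s_gt0 n (G : seq (op n)) p a :
  (forall g, g \in G -> clifford g) -> prob_on G p -> bijective (frame G p) ->
  0 < s_coef G p a.
Proof.
move=> hcl hp /bij_inj inj; rewrite lt0r s_ge0 // andbT; apply/eqP => s0.
have : pauli a = 0 by apply: inj; rewrite frame_pauli0 // frame0.
move=> e; have := hs_paulii a; rewrite {2}e hs0 => /eqP.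
by rewrite eq_sym (negbTE (dnz n)).
Qed.

Section Choi.
Variable m : nat.

Lemma tensmxZr p q r s (A : 'M[algC]_(p, q)) (B : 'M[algC]_(r, s)) c :
  A *t (c *: B) = c *: (A *t B).
Proof. by apply/matrixP => i j; rewrite !mxE mulrCA. Qed.

Lemma tensmx_sumr p q r s (A : 'M[algC]_(p, q)) I (rr : seq I) (P : pred I)
  (F : I -> 'M[algC]_(r, s)) :
  A *t (\sum_(k <- rr | P k) F k) = \sum_(k <- rr | P k) A *t F k.
Proof.
apply/matrixP => i j; rewrite mxE !summxE mulr_sumr.
by apply: eq_bigr => k _; rewrite mxE.
Qed.

Lemma choi_ext (L L' : 'M[algC]_m -> 'M[algC]_m) :
  (forall A, L A = L' A) -> choi L = choi L'.
Proof. by move=> h; rewrite /choi; apply: eq_bigr => i _; apply: eq_bigr => j _; rewrite h. Qed.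

Lemma choiZ (L : 'M[algC]_m -> 'M[algC]_m) c :
  choi (fun A => c *: L A) = c *: choi L.
Proof.
rewrite /choi scaler_sumr; apply: eq_bigr => i _; rewrite scaler_sumr.
by apply: eq_bigr => j _; rewrite tensmxZr.
Qed.

Lemma choi_sum I (r : seq I) (P : pred I) (F : I -> 'M[algC]_m -> 'M[algC]_m) :
  choi (fun A => \sum_(k <- r | P k) F k A) = \sum_(k <- r | P k) choi (F k).
Proof.
rewrite /choi.
under eq_bigr do under eq_bigr do rewrite tensmx_sumr.
under eq_bigr do rewrite exchange_big /=.
by rewrite exchange_big.
Qed.

Lemma psd0 : psd (0 : 'M[algC]_m).
Proof. by move=> v; rewrite mulmx0 mul0mx mxE. Qed.

Lemma psdD (A B : 'M[algC]_m) : psd A -> psd B -> psd (A + B).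
Proof. by move=> hA hB v; rewrite mulmxDr mulmxDl mxE addr_ge0. Qed.

Lemma psdZ (A : 'M[algC]_m) c : 0 <= c -> psd A -> psd (c *: A).
Proof. by move=> c0 hA v; rewrite -scalemxAr -scalemxAl mxE mulr_ge0. Qed.

Lemma psd_sum I (r : seq I) (P : pred I) (F : I -> 'M[algC]_m) :
  (forall k, P k -> psd (F k)) -> psd (\sum_(k <- r | P k) F k).
Proof. by move=> h; apply: big_ind => //; [exact: psd0 | exact: psdD]. Qed.

End Choi.


Lemma Lbar_channel n (G : seq (op n)) (p : op n -> algC) (Lam : op n -> op n -> op n) a :
  prob_on G p -> (forall g, g \in G -> channel (Lam g)) -> 0 < s_coef G p a ->
  channel (Lbar G p Lam a).
Proof.
move=> [p0 p1] hch spos; have sn : s_coef G p a != 0 by rewrite gt_eqF.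
split.
- move=> c A B; rewrite /Lbar scalerA mulrC -scalerA -scalerDr; congr (_ *: _).
  rewrite scaler_sumr -big_split; apply: eq_bigr => z _.
  rewrite scaler_sumr -big_split /= big_seq_cond [in RHS]big_seq_cond; apply: eq_bigr => g /andP [hg _].
  by have [lin _ _] := hch g hg; rewrite lin scalerDr !scalerA mulrC.
- change (psd (choi (fun A => (s_coef G p a)^-1 *:
      \sum_(z : F2_n n) \sum_(g <- G | Xi_is z g a) p g *: Lam g A))).
  rewrite choiZ; apply: psdZ; first by rewrite invr_ge0 ltW.
  rewrite choi_sum; apply: psd_sum => z _.
  rewrite choi_sum big_seq_cond; apply: psd_sum => g /andP [hg _].
  rewrite choiZ; apply: psdZ; first exact: p0.
  by have [_ ps _] := hch g hg.
- move=> A; rewrite /Lbar mxtraceZ raddf_sum.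
  under eq_bigr do rewrite raddf_sum.
  rewrite (eq_bigr (fun z => \sum_(g <- G | Xi_is z g a) p g * \tr A)).
    under eq_bigr do rewrite -mulr_suml.
    by rewrite -mulr_suml -/(s_coef G p a) mulrA mulVf // mul1r.
  move=> z _; rewrite big_seq_cond [RHS]big_seq_cond; apply: eq_bigr => g /andP [hg _].
  by have [_ _ tp] := hch g hg; rewrite /= mxtraceZ tp.
Qed.

Lemma e1_sign' n (a b : F2_2n n) :
  \prod_i e1 (a i) (b i) = 1 \/ \prod_i e1 (a i) (b i) = -1.
Proof. exact: e1_sign. Qed.

Lemma lam_bound n (L : op n -> op n) (l : F2_2n n -> algC) a :
  pauli_channel L -> (forall a, L (pauli a) = l a *: pauli a) -> -1 <= l a <= 1.
Proof.
case=> q [q0 q1 hq] hl.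
have e : l a * (qdim n)%:R = \sum_b q b * ((qdim n)%:R * \prod_i e1 (a i) (b i)).
  have := congr1 (hs (pauli a)) (hl a); rewrite hsZr hs_paulii hq hs_sum => <-.
  by apply: eq_bigr => b _; rewrite hsZr hs_conj3.
have {}e : l a = \sum_b q b * \prod_i e1 (a i) (b i).
  apply: (mulIf (dnz n)); rewrite e mulr_suml; apply: eq_bigr => b _; ring.
rewrite e; apply/andP; split.
  rewrite -[X in - X <= _]q1 -sumrN; apply: ler_sum => b _ /=.
  have [->|->] := e1_sign' a b; rewrite ?mulr1 ?mulrN1 //.
  by apply: (le_trans _ (q0 b)); rewrite oppr_le0.
rewrite -[X in _ <= X]q1; apply: ler_sum => b _ /=.
have [->|->] := e1_sign' a b; rewrite ?mulr1 ?mulrN1 //.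
by apply: (le_trans _ (q0 b)); rewrite oppr_le0.
Qed.

Lemma T_le n (G : seq (op n)) p a (f : op n -> algC) :
  prob_on G p -> (forall g, g \in G -> f g <= 1) ->
  \sum_(z : F2_n n) \sum_(g <- G | Xi_is z g a) p g * f g <= s_coef G p a.
Proof.
case => p0 _ hf; rewrite /s_coef; apply: ler_sum => z _; rewrite big_seq_cond [X in _ <= X]big_seq_cond.
by apply: ler_sum => g /andP [hg _]; apply: ler_piMr; [exact: p0 | exact: hf].
Qed.

Lemma pauli_part n (G : seq (op n)) (p : op n -> algC) (Lam : op n -> op n -> op n) a :
  prob_on G p -> 0 < s_coef G p a ->
  (forall g, g \in G -> pauli_channel (Lam g)) ->
  forall lam : op n -> F2_2n n -> algC,
    (forall g a, g \in G -> Lam g (pauli a) = lam g a *: pauli a) ->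
    Lbar G p Lam a (pauli a) = lbar G p lam a *: pauli a /\ -1 <= lbar G p lam a <= 1.
Proof.
move=> hp spos hpc lam hlam; have sn : s_coef G p a != 0 by rewrite gt_eqF.
split.
  rewrite /Lbar /lbar -scalerA; congr (_ *: _).
  rewrite scaler_suml; apply: eq_bigr => z _; rewrite scaler_suml big_seq_cond [in RHS]big_seq_cond.
  by apply: eq_bigr => g /andP [hg _]; rewrite hlam // scalerA.
have hb g : g \in G -> -1 <= lam g a <= 1.
  by move=> hg; apply: lam_bound (hpc g hg) _ => b; apply: hlam.
rewrite /lbar.
set T := \sum_(z : F2_n n) _.
have h1 : T <= s_coef G p a by apply: T_le => // g hg; case/andP: (hb g hg).
have h2 : - T <= s_coef G p a.
  rewrite /T -sumrN.
  under eq_bigr do rewrite -sumrN.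
  under eq_bigr do under eq_bigr do rewrite -mulrN.
  by apply: T_le => // g hg; case/andP: (hb g hg); rewrite lerNl.
have si : 0 <= (s_coef G p a)^-1 by rewrite invr_ge0 ltW.
apply/andP; split.
  rewrite -(mulVf sn) -mulrN; apply: ler_wpM2l => //; by rewrite lerNl.
by rewrite -(mulVf sn); apply: ler_wpM2l.
Qed.

End Aux.
Import Aux.

Theorem lemma1 (n : nat) (G : seq (op n)) (p : op n -> algC)
    (Lam : op n -> op n -> op n) :
  uniq G ->
  (forall g, g \in G -> clifford g) ->
  prob_on G p ->
  bijective (frame G p) ->
  (forall g, g \in G -> channel (Lam g)) ->
  [/\ (forall A, frame G p A =
         (qdim n)%:R^-1 *: \sum_(a : F2_2n n)
            s_coef G p a *: sop_outer (pauli a) (pauli a) A),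
      (forall a, 0 < s_coef G p a /\ s_coef G p a <= 1),
      (forall a, channel (Lbar G p Lam a)),
      (forall A, noisy_frame G p Lam A =
         (qdim n)%:R^-1 *: \sum_(a : F2_2n n)
            s_coef G p a *: sop_outer (pauli a) (pauli a) (Lbar G p Lam a A)) &
      ((forall g, g \in G -> pauli_channel (Lam g)) ->
       forall lam : op n -> F2_2n n -> algC,
         (forall g a, g \in G -> Lam g (pauli a) = lam g a *: pauli a) ->
         forall a, Lbar G p Lam a (pauli a) = lbar G p lam a *: pauli a /\
                   -1 <= lbar G p lam a <= 1)].
Proof.
move=> _ hcl hp hbij hch.
have spos a : 0 < s_coef G p a by apply: s_gt0.
have sn a : s_coef G p a != 0 by rewrite gt_eqF.
split.
- by move=> A; apply: frameE.
- by move=> a; split; [exact: spos | apply: s_le1].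
- by move=> a; apply: Lbar_channel.
- by move=> A; apply: noisyE.
- by move=> hpc lam hlam a; apply: pauli_part.
Qed.
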